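(* For all deterministic parity tree automata $A$ and $B$, Duplicator has a winning strategy in the automata game $G(A,B)$ if and only if $L(A)\le_W L(B)$.
   Context: A deterministic parity tree automaton is $A=\langle\Sigma,Q,\delta,q_0,\mathrm{rank}\rangle$ with $\delta:Q\times\Sigma\to Q\times Q$ total; we write $q\xrightarrow{\sigma}q_1,q_2$ for $\delta(q,\sigma)=(q_1,q_2)$. A run is accepting if on every path the highest rank seen infinitely often is even; $L(A)$ is the set of accepted trees. A state is all-rejecting if the automaton started there accepts no tree; $\bot$ denotes such a state. $\le_W$ is continuous (Wadge) reducibility between subsets of tree spaces $T_\Sigma$ with the standard Cantor-type metric. The automata game $G(A,B)$: initially one token of Spoiler is in the initial state of $A$ and one token of Duplicator in the initial state of $B$. In each round each player performs finitely many actions of the following kinds on his own automaton: (fire) for a token in state $q$ choose a transition $q\xrightarrow{\sigma}q_1,q_2$, remove the token and place new tokens in $q_1$ and $q_2$; (remove) remove a token lying in a state other than $\bot$. Spoiler (on $A$) must in each round perform an action for every token created in the previous round; Duplicator (on $B$) may postpone acting on a token, but not forever. The tokens of each player trace a partial run of the respective automaton; a removed token is interpreted as plugging in an accepting subrun at the corresponding node, yielding a full run of each automaton. Duplicator wins iff both resulting runs are accepting or both are rejecting. *)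

(* Defs.v *)
From HB Require Import structures.
From mathcomp Require Import all_boot.

Set Implicit Arguments.
Unset Strict Implicit.
Unset Printing Implicit Defensive.

(* Nodes are finite words over {false = left, true = right}, read from the root. *)
Definition node := seq bool.
Definition tree (S : Type) := node -> S.

Definition prefix (pi : nat -> bool) (n : nat) : node := mkseq pi n.

Record dpta := DPTA {
  Sig : finType;
  St : finType;
  delta : St -> Sig -> St * St;
  init : St;
  rank : St -> nat
}.

Definition dir (Q : Type) (d : bool) (p : Q * Q) : Q := if d then p.2 else p.1.

Fixpoint runFrom (A : dpta) (q : St A) (t : tree (Sig A)) (w : node) : St A :=
  match w with
  | [::] => q
  | d :: w' => runFrom (dir d (delta q (t [::]))) (fun v => t (d :: v)) w'
  end.

Definition inf_often (r : nat -> nat) (m : nat) : Prop :=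
  forall N, exists n, N <= n /\ r n = m.

Definition parity_ok (r : nat -> nat) : Prop :=
  exists m, ~~ odd m /\ inf_often r m /\ (forall m', inf_often r m' -> m' <= m).

Definition accepting_run (A : dpta) (rho : node -> St A) : Prop :=
  forall pi : nat -> bool, parity_ok (fun n => rank (rho (prefix pi n))).

Definition accepts (A : dpta) (q : St A) (t : tree (Sig A)) : Prop :=
  accepting_run (runFrom q t).

Definition lang (A : dpta) : tree (Sig A) -> Prop := fun t => accepts (init A) t.

Definition all_rejecting (A : dpta) (q : St A) : Prop :=
  forall t : tree (Sig A), ~ accepts q t.

(* continuity w.r.t. the standard metric d(t,t') = 2^-(least depth of difference) *)
Definition continuous (S T : Type) (f : tree S -> tree T) : Prop :=
  forall (t : tree S) (n : nat), exists m : nat, forall t' : tree S,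
    (forall w : node, size w <= m -> t' w = t w) ->
    forall w : node, size w <= n -> f t' w = f t w.

Definition wadge_le (S T : Type) (L : tree S -> Prop) (M : tree T -> Prop) : Prop :=
  exists f : tree S -> tree T, continuous f /\ forall t, L t <-> M (f t).

(* A position of one player records, for each node, whether a token there has been
   fired (with the chosen letter, i.e. transition), removed, or not acted upon. *)
Inductive status (S : Type) := Untouched | Fired of S | Removed.
Arguments Untouched {S}.
Arguments Removed {S}.

Definition pos (A : dpta) := node -> status (Sig A).

(* an action: act on the token at a node; Some s = fire the transition on letter s,
   None = remove the token *)
Definition action (A : dpta) := (node * option (Sig A))%type.

Fixpoint stateAt (A : dpta) (q : St A) (p : pos A) (w : node) : St A :=
  match w with
  | [::] => q
  | d :: w' =>
      match p [::] with
      | Fired s => stateAt (dir d (delta q s)) (fun v => p (d :: v)) w'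
      | _ => q
      end
  end.

Definition token (A : dpta) (p : pos A) (w : node) : Prop :=
  p w = Untouched /\
  (w = [::] \/ exists (v : node) (d : bool) (s : Sig A), w = rcons v d /\ p v = Fired s).

Definition apply_action (A : dpta) (p : pos A) (a : action A) : pos A :=
  fun v => if v == a.1 then
             match a.2 with Some s => Fired s | None => Removed end
           else p v.

Definition legal_action (A : dpta) (p : pos A) (a : action A) : Prop :=
  token p a.1 /\
  (a.2 = None -> ~ all_rejecting (stateAt (init A) p a.1)).

Definition apply_move (A : dpta) (p : pos A) (m : seq (action A)) : pos A :=
  foldl (@apply_action A) p m.

Fixpoint legal_move (A : dpta) (p : pos A) (m : seq (action A)) : Prop :=
  match m with
  | [::] => True
  | a :: m' => legal_action p a /\ legal_move (apply_action p a) m'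
  end.

Fixpoint posSeq (A : dpta) (m : nat -> seq (action A)) (k : nat) : pos A :=
  match k with
  | 0 => fun _ => Untouched
  | k'.+1 => apply_move (posSeq m k') (m k')
  end.

(* Spoiler's plays: legal moves, and in each round every token present at the
   beginning of the round (i.e. created in the previous round) is acted upon *)
Definition spoiler_legal (A : dpta) (s : nat -> seq (action A)) : Prop :=
  forall k, legal_move (posSeq s k) (s k) /\
            (forall w, token (posSeq s k) w -> ~ token (posSeq s k.+1) w).

(* Duplicator may postpone acting on a token, but not forever *)
Definition live (A : dpta) (P : nat -> pos A) : Prop :=
  forall k w, token (P k) w -> exists k', k <= k' /\ P k' w <> Untouched.

Inductive RunState (A : dpta) (P : nat -> pos A) : node -> St A -> Prop :=
| RS_root : RunState P [::] (init A)
| RS_step : forall w q d s k,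
    RunState P w q -> P k w = Fired s ->
    RunState P (rcons w d) (dir d (delta q s)).

(* The resulting full run (removed tokens replaced by accepting subruns) is accepting
   iff every path consisting only of fired nodes satisfies the parity condition
   (paths entering a removed node lie eventually in an accepting subrun). *)
Definition play_accepting (A : dpta) (P : nat -> pos A) : Prop :=
  forall pi : nat -> bool,
    (forall n, exists k s, P k (prefix pi n) = Fired s) ->
    forall rs : nat -> St A, (forall n, RunState P (prefix pi n) (rs n)) ->
    parity_ok (fun n => rank (rs n)).

(* Duplicator strategy: maps the sequence of Spoiler's moves so far (including the
   current round's move) to Duplicator's move in the current round *)
Definition dup_strategy (A B : dpta) := seq (seq (action A)) -> seq (action B).

Definition dup_moves (A B : dpta) (str : dup_strategy A B) (s : nat -> seq (action A))
  : nat -> seq (action B) := fun k => str (mkseq s k.+1).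

Definition dup_winning (A B : dpta) (str : dup_strategy A B) : Prop :=
  forall s : nat -> seq (action A), spoiler_legal s ->
    (forall k, legal_move (posSeq (dup_moves str s) k) (dup_moves str s k)) /\
    live (posSeq (dup_moves str s)) /\
    (play_accepting (posSeq s) <-> play_accepting (posSeq (dup_moves str s))).

(* Main.v *)
Require Import Defs.
From HB Require Import structures.
From mathcomp Require Import all_boot.
From Stdlib Require Import ClassicalEpsilon Classical FunctionalExtensionality.

Set Implicit Arguments.
Unset Strict Implicit.
Unset Printing Implicit Defensive.
Local Notation prefix := Defs.prefix.

Lemma runFrom_rcons (A : dpta) (q : St A) (t : tree (Sig A)) w d :
  runFrom q t (rcons w d) = dir d (delta (runFrom q t w) (t w)).
Proof. by elim: w q t => [|a w IH] q t //=; rewrite IH. Qed.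

Lemma runFrom_cat (A : dpta) (q : St A) (t : tree (Sig A)) u v :
  runFrom q t (u ++ v) = runFrom (runFrom q t u) (fun x => t (u ++ x)) v.
Proof. by elim: u q t => [|a u IH] q t //=; rewrite IH. Qed.

Lemma stateAt_run (A : dpta) (q : St A) (p : pos A) (t : tree (Sig A)) w :
  (forall j, j < size w -> p (take j w) = Fired (t (take j w))) ->
  stateAt q p w = runFrom q t w.
Proof.
elim: w q p t => [|d w IH] q p t H //=.
have H0 := H 0 isT; rewrite /= in H0; rewrite H0.
apply: IH => j Hj; exact: (H j.+1 Hj).
Qed.

Lemma stateAt_ext (A : dpta) (q : St A) (p p' : pos A) w :
  (forall j, j < size w -> p (take j w) = p' (take j w)) ->
  stateAt q p w = stateAt q p' w.
Proof.
elim: w q p p' => [|d w IH] q p p' H //=.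
have H0 := H 0 isT; rewrite /= in H0; rewrite H0.
case: (p' [::]) => // s; apply: IH => j Hj; exact: (H j.+1 Hj).
Qed.

Lemma prefixS pi n : prefix pi n.+1 = rcons (prefix pi n) (pi n).
Proof. exact: mkseqS. Qed.

Lemma size_prefix pi n : size (prefix pi n) = n.
Proof. exact: size_mkseq. Qed.

Lemma take_prefix pi n j : j <= n -> take j (prefix pi n) = prefix pi j.
Proof.
move=> Hj; rewrite /prefix /mkseq -map_take take_iota.
by rewrite (minn_idPl Hj).
Qed.

Lemma prefixD pi n m :
  prefix pi (n + m) = prefix pi n ++ prefix (fun i => pi (n + i)) m.
Proof.
rewrite /prefix /mkseq iotaD map_cat add0n; congr (_ ++ _).
by rewrite -(addn0 n) iotaDl -map_comp addn0.
Qed.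

Lemma inf_often_ext r r' m : (forall n, r n = r' n) -> inf_often r m -> inf_often r' m.
Proof. move=> E H N; have [n [Hn Hr]] := H N; exists n; by rewrite -E. Qed.

Lemma parity_ok_ext r r' : (forall n, r n = r' n) -> parity_ok r -> parity_ok r'.
Proof.
move=> E [m [Hm [Hi Hmax]]]; exists m; split=> //; split.
  exact: inf_often_ext Hi.
move=> m' H; apply: Hmax; apply: inf_often_ext H => n; by rewrite E.
Qed.

Lemma inf_often_shift r n m : inf_often (fun i => r (n + i)) m <-> inf_often r m.
Proof.
split=> H N.
  have [i [Hi Hr]] := H N.
  exists (n + i). split; last exact Hr.
  exact: (leq_trans Hi (leq_addl n i)).
have [k [Hk Hr]] := H (N + n).
have Hnk : n <= k by exact: (leq_trans (leq_addl N n) Hk).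
exists (k - n); split.
  by rewrite leq_subRL // addnC.
by rewrite subnKC.
Qed.

Lemma parity_shift r n : parity_ok (fun i => r (n + i)) -> parity_ok r.
Proof.
move=> [m [Hm [Hi Hmax]]]; exists m; split=> //; split.
  exact: (proj1 (inf_often_shift r n m) Hi).
move=> m' H; apply: Hmax; exact: (proj2 (inf_often_shift r n m') H).
Qed.

Definition firedP (A : dpta) (P : nat -> pos A) (w : node) := exists k s, P k w = Fired s.

Lemma RS_run (A : dpta) (P : nat -> pos A) (T : tree (Sig A)) :
  (forall k v s, P k v = Fired s -> T v = s) ->
  forall w q, RunState P w q -> q = runFrom (init A) T w.
Proof.
move=> H1 w q; elim=> [|w0 q0 d s k _ IH Hk] //.
by rewrite runFrom_rcons -IH (H1 _ _ _ Hk).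
Qed.

Lemma RS_exists (A : dpta) (P : nat -> pos A) (T : tree (Sig A)) pi :
  (forall k v s, P k v = Fired s -> T v = s) ->
  forall n, (forall j, j < n -> firedP P (prefix pi j)) ->
  RunState P (prefix pi n) (runFrom (init A) T (prefix pi n)).
Proof.
move=> H1; elim=> [|n IH] H.
  exact: RS_root.
have [k [s Hk]] := H n (ltnSn n).
rewrite prefixS runFrom_rcons (H1 _ _ _ Hk).
apply: RS_step Hk; apply: IH => j Hj; apply: H; exact: ltnW.
Qed.

Lemma min_counter (Q : nat -> Prop) N :
  ~ Q N -> exists n, ~ Q n /\ (forall j, j < n -> Q j).
Proof.
elim/ltn_ind: N => N IH HN.
case: (classic (forall j, j < N -> Q j)) => H; first by exists N.
have [j Hj] := not_all_ex_not _ _ H.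
have [Hj1 Hj2] := imply_to_and _ _ Hj.
exact: IH j Hj1 Hj2.
Qed.

Lemma play_acc_iff (A : dpta) (P : nat -> pos A) (T : tree (Sig A)) :
  (forall k v s, P k v = Fired s -> T v = s) ->
  (forall u k, P k u = Removed -> accepts (runFrom (init A) T u) (fun x => T (u ++ x))) ->
  (forall pi n, (forall j, j < n -> firedP P (prefix pi j)) ->
     exists k, P k (prefix pi n) <> Untouched) ->
  (play_accepting P <-> @lang A T).
Proof.
move=> H1 H2 H3; split.
  move=> Hp pi.
  case: (classic (forall n, firedP P (prefix pi n))) => Hall.
    apply: (Hp pi Hall (fun n => runFrom (init A) T (prefix pi n))).
    move=> n; apply: RS_exists => // j _; exact: Hall.
  have [n0 Hn0] := not_all_ex_not _ _ Hall.
  have [n [Hn Hmin]] := @min_counter (fun n => firedP P (prefix pi n)) n0 Hn0.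
  have [k Hk] := H3 pi n Hmin.
  have HR : P k (prefix pi n) = Removed.
    move: Hk; case E: (P k (prefix pi n)) => [|s|] // _.
    by exfalso; apply: Hn; exists k, s.
  have Hacc := H2 _ _ HR (fun i => pi (n + i)).
  apply: (parity_shift (n := n)).
  apply: parity_ok_ext Hacc => m /=.
  by rewrite -runFrom_cat -prefixD.
move=> Hl pi Hall rs Hrs.
apply: parity_ok_ext (Hl pi) => n /=.
by rewrite (RS_run H1 (Hrs n)).
Qed.

Definition inv_pos (A : dpta) (p : pos A) :=
  forall v d, p (rcons v d) <> Untouched -> exists s, p v = Fired s.

Definition rem_ok (A : dpta) (p : pos A) :=
  forall u, p u = Removed -> ~ all_rejecting (stateAt (init A) p u).

Lemma anc (A : dpta) (p : pos A) w :
  inv_pos p -> p w <> Untouched -> forall j, j < size w -> exists s, p (take j w) = Fired s.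
Proof.
move=> Hi; elim/last_ind: w => [|v d IH] Hw j //.
rewrite size_rcons ltnS leq_eqVlt => /orP [/eqP ->|Hj].
  by rewrite -cats1 take_size_cat //; exact: Hi Hw.
have [s Hs] := Hi v d Hw.
rewrite -cats1 takel_cat ?(ltnW Hj) //.
apply: IH Hj; by rewrite Hs.
Qed.

Lemma apply_other (A : dpta) (p : pos A) a v : v != a.1 -> apply_action p a v = p v.
Proof. by move=> H; rewrite /apply_action (negbTE H). Qed.

Lemma persist_action (A : dpta) (p : pos A) a w :
  legal_action p a -> p w <> Untouched -> apply_action p a w = p w.
Proof.
move=> [[Ht _] _] Hw; rewrite apply_other //; apply/eqP => E; by rewrite E Ht in Hw.
Qed.

Lemma size_rcons_neq (v : node) d : v != rcons v d.
Proof. by apply/eqP => E; have := congr1 size E; rewrite size_rcons => /n_Sn. Qed.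

Lemma inv_action (A : dpta) (p : pos A) a :
  legal_action p a -> inv_pos p -> inv_pos (apply_action p a).
Proof.
move=> Hl Hi v d H.
case E: (rcons v d == a.1).
  have [[_ Htok] _] := Hl.
  case: Htok => [Ha|[v' [d' [s [Ha Hs]]]]].
    by move: E; rewrite Ha; case: (v) => [|? ?].
  move/eqP: E; rewrite Ha => /rcons_inj [Ev _]; subst v'.
  exists s; rewrite apply_other //.
  by rewrite Ha size_rcons_neq.
move/negbT: E => E; rewrite apply_other // in H.
have [s Hs] := Hi v d H; exists s.
by rewrite persist_action // Hs.
Qed.

Lemma stateAt_action (A : dpta) (p : pos A) a u :
  legal_action p a -> inv_pos p -> (u = a.1 \/ p u <> Untouched) ->
  stateAt (init A) (apply_action p a) u = stateAt (init A) p u.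
Proof.
move=> Hl Hi Hu; apply: stateAt_ext => j Hj.
case: Hu => [Eu|Hu].
  rewrite apply_other // -Eu; apply/eqP => E.
  by have := congr1 size E; rewrite size_take Hj => /eqP; rewrite ltn_eqF.
have [s Hs] := anc Hi Hu Hj.
by rewrite persist_action // Hs.
Qed.

Lemma rem_action (A : dpta) (p : pos A) a :
  legal_action p a -> inv_pos p -> rem_ok p -> rem_ok (apply_action p a).
Proof.
move=> Hl Hi Hr u Hu.
case E: (u == a.1).
  move/eqP: E => E; rewrite stateAt_action //; last by left.
  move: Hu; rewrite /apply_action E eqxx; case Ea: a.2 => [s|] // _.
  by apply: Hl.2.
move/negbT: E => E; rewrite apply_other // in Hu.
rewrite stateAt_action //; last by right; rewrite Hu.
exact: Hr.
Qed.

Lemma legal_move_inv (A : dpta) (m : seq (action A)) (p : pos A) :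
  legal_move p m -> inv_pos p -> rem_ok p ->
  [/\ inv_pos (apply_move p m), rem_ok (apply_move p m) &
      forall w, p w <> Untouched -> apply_move p m w = p w].
Proof.
elim: m p => [|a m IH] p /= Hl Hi Hr; first by split.
case: Hl => Ha Hm.
have [H1 H2 H3] := IH _ Hm (inv_action Ha Hi) (rem_action Ha Hi Hr).
split=> // w Hw.
rewrite /apply_move /= in H3 *.
rewrite H3; first exact: persist_action.
by rewrite persist_action.
Qed.

Definition legal_play (A : dpta) (m : nat -> seq (action A)) :=
  forall k, legal_move (posSeq m k) (m k).

Lemma play_inv (A : dpta) (m : nat -> seq (action A)) :
  legal_play m -> forall k, inv_pos (posSeq m k) /\ rem_ok (posSeq m k).
Proof.
move=> Hl; elim=> [|k [Hi Hr]].
  by split=> [v d H|u H] //.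
have [H1 H2 _] := legal_move_inv (Hl k) Hi Hr; by split.
Qed.

Lemma play_persist (A : dpta) (m : nat -> seq (action A)) :
  legal_play m -> forall k k' w, k <= k' -> posSeq m k w <> Untouched ->
  posSeq m k' w = posSeq m k w.
Proof.
move=> Hl k k' w /subnK <-; elim: (k' - k) => [|n IH] // Hw.
rewrite addSn /=.
have [Hi Hr] := play_inv Hl (n + k).
have [_ _ H3] := legal_move_inv (Hl (n + k)) Hi Hr.
rewrite H3 ?IH //; by rewrite IH.
Qed.

Definition gfire (A : dpta) (P : nat -> pos A) (a0 : Sig A) (w : node) : Sig A :=
  epsilon (inhabits a0) (fun s => exists k, P k w = Fired s).

Definition fill (A : dpta) (a0 : Sig A) (q : St A) : tree (Sig A) :=
  epsilon (inhabits (fun _ => a0)) (fun t => accepts q t).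

Definition comp (A : dpta) (P : nat -> pos A) (a0 : Sig A) (w : node) : Sig A :=
  match excluded_middle_informative
          (exists ux : node * node, exists k, w = ux.1 ++ ux.2 /\ P k ux.1 = Removed) with
  | left _ =>
     let ux := epsilon (inhabits ([::], [::]))
                 (fun ux : node * node => exists k, w = ux.1 ++ ux.2 /\ P k ux.1 = Removed) in
     fill a0 (runFrom (init A) (gfire P a0) ux.1) ux.2
  | right _ => gfire P a0 w
  end.

Lemma fired_uniq (A : dpta) (m : nat -> seq (action A)) k k' w s s' :
  legal_play m -> posSeq m k w = Fired s -> posSeq m k' w = Fired s' -> s = s'.
Proof.
move=> Hl H H'.
have := play_persist Hl (leq_maxl k k') (w := w); rewrite H => E.
have := play_persist Hl (leq_maxr k k') (w := w); rewrite H' => E'.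
have: Fired s = Fired s' by rewrite -E // -E'.
by case.
Qed.

Lemma gfire_val (A : dpta) (m : nat -> seq (action A)) a0 k w s :
  legal_play m -> posSeq m k w = Fired s -> gfire (posSeq m) a0 w = s.
Proof.
move=> Hl H.
have [k' Hk'] : exists k', posSeq m k' w = Fired (gfire (posSeq m) a0 w).
  apply: (epsilon_spec (inhabits a0) (fun s => exists k, posSeq m k w = Fired s)).
  by exists s, k.
exact: fired_uniq Hl Hk' H.
Qed.

Lemma removed_prefix (A : dpta) (m : nat -> seq (action A)) k k' u w :
  legal_play m -> posSeq m k u = Removed -> posSeq m k' w <> Untouched ->
  size u < size w -> take (size u) w <> u.
Proof.
move=> Hl Hu Hw Hs E.
set K := maxn k k'.
have Eu : posSeq m K u = Removed.
  by rewrite (play_persist Hl (leq_maxl k k')) ?Hu.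
have Ew : posSeq m K w <> Untouched.
  by rewrite (play_persist Hl (leq_maxr k k')).
have [Hi _] := play_inv Hl K.
have [s Hs'] := anc Hi Ew Hs.
by rewrite E Eu in Hs'.
Qed.

Lemma comp_fired (A : dpta) (m : nat -> seq (action A)) a0 k v s :
  legal_play m -> posSeq m k v = Fired s -> comp (posSeq m) a0 v = s.
Proof.
move=> Hl Hv; rewrite /comp.
case: excluded_middle_informative => [[[u x] [k' [/= Ev Hu]]]|_].
  exfalso.
  case: x Ev => [|c x] Ev.
    rewrite cats0 in Ev; subst u.
    have := play_persist Hl (leq_maxl k k') (w := v); rewrite Hv => E.
    have := play_persist Hl (leq_maxr k k') (w := v); rewrite Hu => E'.
    have E1 := E ltac:(done); have E2 := E' ltac:(done).
    by rewrite E1 in E2.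
  apply: (removed_prefix Hl Hu (w := v) (k' := k)); first by rewrite Hv.
    by rewrite Ev size_cat /= addnS ltnS leq_addr.
  by rewrite Ev take_size_cat.
exact: gfire_val Hl Hv.
Qed.

Lemma stateAt_gfire (A : dpta) (m : nat -> seq (action A)) a0 k u :
  legal_play m -> posSeq m k u <> Untouched ->
  stateAt (init A) (posSeq m k) u = runFrom (init A) (gfire (posSeq m) a0) u.
Proof.
move=> Hl Hu; apply: stateAt_run => j Hj.
have [Hi _] := play_inv Hl k.
have [s Hs] := anc Hi Hu Hj.
by rewrite Hs (gfire_val a0 Hl Hs).
Qed.

Lemma stateAt_comp (A : dpta) (m : nat -> seq (action A)) a0 k u :
  legal_play m -> posSeq m k u <> Untouched ->
  stateAt (init A) (posSeq m k) u = runFrom (init A) (comp (posSeq m) a0) u.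
Proof.
move=> Hl Hu; apply: stateAt_run => j Hj.
have [Hi _] := play_inv Hl k.
have [s Hs] := anc Hi Hu Hj.
by rewrite Hs (comp_fired a0 Hl Hs).
Qed.

Lemma comp_removed (A : dpta) (m : nat -> seq (action A)) a0 k u x :
  legal_play m -> posSeq m k u = Removed ->
  comp (posSeq m) a0 (u ++ x) = fill a0 (stateAt (init A) (posSeq m k) u) x.
Proof.
move=> Hl Hu; rewrite /comp.
case: excluded_middle_informative => [Hex|Hn]; last first.
  by exfalso; apply: Hn; exists (u, x), k.
set ux := epsilon _ _.
have [k' [/= Ev Hu']] : exists k', u ++ x = ux.1 ++ ux.2 /\ posSeq m k' ux.1 = Removed.
  exact: (epsilon_spec (inhabits ([::], [::]))
    (fun ux : node * node => exists k, u ++ x = ux.1 ++ ux.2 /\ posSeq m k ux.1 = Removed)).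
case: ux Ev Hu' => u' x' /= Ev Hu'.
have Esz : size u' = size u.
  case: (ltngtP (size u') (size u)) => // Hlt.
    exfalso; apply: (removed_prefix Hl Hu' (w := u) (k' := k)) => //; first by rewrite Hu.
    by rewrite -(takel_cat x (ltnW Hlt)) Ev take_size_cat.
  exfalso; apply: (removed_prefix Hl Hu (w := u') (k' := k')) => //; first by rewrite Hu'.
  by rewrite -(takel_cat x' (ltnW Hlt)) -Ev take_size_cat.
have Eu : u' = u.
  by rewrite -(take_size_cat x' (erefl (size u'))) -Ev Esz take_size_cat.
subst u'.
have Ex : x' = x.
  by rewrite -(drop_size_cat x' (erefl (size u))) -Ev drop_size_cat.
subst x'.
by rewrite (stateAt_gfire a0 Hl (k := k)) // Hu.
Qed.

Lemma accepts_ext (A : dpta) (q : St A) (t t' : tree (Sig A)) :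
  (forall w, t w = t' w) -> accepts q t -> accepts q t'.
Proof.
move=> E; have -> : t = t' by apply: functional_extensionality.
done.
Qed.

Lemma fill_acc (A : dpta) a0 (q : St A) : ~ all_rejecting q -> accepts q (fill a0 q).
Proof.
move=> H; apply: (epsilon_spec (inhabits (fun _ => a0)) (fun t => accepts q t)).
apply: NNPP => Hn; apply: H => t Ht; apply: Hn; by exists t.
Qed.

Lemma comp_acc (A : dpta) (m : nat -> seq (action A)) a0 k u :
  legal_play m -> posSeq m k u = Removed ->
  accepts (runFrom (init A) (comp (posSeq m) a0) u) (fun x => comp (posSeq m) a0 (u ++ x)).
Proof.
move=> Hl Hu.
rewrite -(stateAt_comp a0 Hl (k := k)); last by rewrite Hu.
apply: (accepts_ext (t := fill a0 (stateAt (init A) (posSeq m k) u))).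
  by move=> x; rewrite (comp_removed a0 x Hl Hu).
apply: fill_acc; have [_ Hr] := play_inv Hl k; exact: Hr.
Qed.

Lemma live_H3 (A : dpta) (P : nat -> pos A) :
  live P -> forall pi n, (forall j, j < n -> firedP P (prefix pi j)) ->
  exists k, P k (prefix pi n) <> Untouched.
Proof.
move=> Hl pi [|j] H.
  case E: (P 0 (prefix pi 0)) => [|s|]; last by exists 0; rewrite E.
    have [k' [_ Hk']] := Hl 0 (prefix pi 0) (conj E (or_introl (erefl _))).
    by exists k'.
  by exists 0; rewrite E.
have [k0 [s Hs]] := H j (ltnSn j).
case E: (P k0 (prefix pi j.+1)) => [|s'|]; last by exists k0; rewrite E.
  have Ht : token (P k0) (prefix pi j.+1).
    split=> //; right; exists (prefix pi j), (pi j), s; by rewrite prefixS.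
  have [k' [_ Hk']] := Hl _ _ Ht; by exists k'.
by exists k0; rewrite E.
Qed.

Lemma play_comp_iff (A : dpta) (m : nat -> seq (action A)) a0 :
  legal_play m -> live (posSeq m) ->
  (play_accepting (posSeq m) <-> @lang A (comp (posSeq m) a0)).
Proof.
move=> Hl Hlive; apply: play_acc_iff.
- move=> k v s Hv; exact: comp_fired Hl Hv.
- move=> u k Hu; exact: comp_acc Hl Hu.
- exact: live_H3.
Qed.

Definition nodesz (k : nat) : seq node := [seq val x | x <- enum {: k.-tuple bool}].

Lemma mem_nodesz w k : (w \in nodesz k) = (size w == k).
Proof.
apply/idP/idP.
  by case/mapP => x _ ->; rewrite size_tuple.
move=> H; apply/mapP; exists (Tuple H) => //; by rewrite mem_enum.
Qed.

Lemma uniq_nodesz k : uniq (nodesz k).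
Proof. rewrite map_inj_uniq ?enum_uniq //; exact: val_inj. Qed.

Definition nodesUpTo n : seq node := undup (flatten [seq nodesz i | i <- iota 0 n]).

Lemma mem_nodesUpTo w n : (w \in nodesUpTo n) = (size w < n).
Proof.
rewrite mem_undup; apply/flatten_mapP/idP.
  by case=> i; rewrite mem_iota add0n => /andP [_ Hi]; rewrite mem_nodesz => /eqP ->.
move=> H; exists (size w); first by rewrite mem_iota add0n.
by rewrite mem_nodesz.
Qed.

Lemma uniq_nodesUpTo n : uniq (nodesUpTo n).
Proof. exact: undup_uniq. Qed.

Lemma fire_move (A : dpta) (p : pos A) (vl : node -> Sig A) L v :
  apply_move p [seq (w, Some (vl w)) | w <- L] v = if v \in L then Fired (vl v) else p v.
Proof.
elim: L p => [|w L IH] p //=.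
rewrite /apply_move /= in IH *; rewrite IH in_cons /apply_action /=.
case: (v \in L); first by rewrite orbT.
rewrite orbF; case E: (v == w) => //; by rewrite (eqP E).
Qed.

Lemma legal_fire (A : dpta) (vl : node -> Sig A) L (p : pos A) :
  uniq L -> (forall w, w \in L -> p w = Untouched) ->
  (forall L1 w L2, L = L1 ++ w :: L2 ->
     w = [::] \/ exists v d, w = rcons v d /\ ((exists s, p v = Fired s) \/ v \in L1)) ->
  legal_move p [seq (w, Some (vl w)) | w <- L].
Proof.
elim: L p => [|w L IH] p //= /andP [Hw HL] Hun Hpar; split.
  split=> //=; split; first by apply: Hun; rewrite mem_head.
  case: (Hpar [::] w L erefl) => [->|[v [d [Ev [[s Hs]|//]]]]]; first by left.
  by right; exists v, d, s.
apply: IH => //.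
  move=> w' Hw'; rewrite apply_other /=; last by apply: contraNneq Hw => <-.
  by apply: Hun; rewrite in_cons Hw' orbT.
move=> L1 w' L2 EL.
case: (Hpar (w :: L1) w' L2) => [|->|[v [d [Ev Hv]]]]; first by rewrite EL.
  by left.
right; exists v, d; split=> //.
case: Hv => [[s Hs]|]; rewrite ?in_cons.
  left; case E: (v == w).
    by exists (vl w); rewrite /apply_action /= E.
  by exists s; rewrite apply_other ?E.
case/orP => [/eqP E|H]; last by right.
by left; exists (vl w); rewrite /apply_action /= E eqxx.
Qed.

Definition sp (A : dpta) (t : tree (Sig A)) (k : nat) : seq (action A) :=
  [seq (w, Some (t w)) | w <- nodesz k].

Lemma posSeq_sp (A : dpta) (t : tree (Sig A)) k w :
  posSeq (sp t) k w = if size w < k then Fired (t w) else Untouched.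
Proof.
elim: k => [|k IH] //=.
rewrite fire_move mem_nodesz IH.
case: (ltngtP (size w) k) => H.
- by rewrite ltnS ltnW.
- by rewrite ltnS leqNgt H.
- by rewrite H ltnSn.
Qed.

Lemma sp_legal (A : dpta) (t : tree (Sig A)) : spoiler_legal (sp t).
Proof.
move=> k; split.
  apply: legal_fire; first exact: uniq_nodesz.
    by move=> w; rewrite mem_nodesz posSeq_sp => /eqP ->; rewrite ltnn.
  move=> L1 w L2 EL.
  have : w \in nodesz k by rewrite EL mem_cat mem_head orbT.
  rewrite mem_nodesz => /eqP Hw.
  case/lastP: w Hw {EL} => [|v d] Hw; first by left.
  right; exists v, d; split=> //; left; exists (t v).
  by rewrite posSeq_sp -Hw size_rcons ltnSn.
move=> w [Hu Hp] [Hu' _].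
have Hs : size w <= k.
  case: Hp => [->|[v [d [s [-> Hv]]]]] //.
  move: Hv; rewrite posSeq_sp size_rcons; by case: ifP.
move: Hu'; rewrite [posSeq _ k.+1 w]posSeq_sp ltnS Hs //.
Qed.

Definition detd (A : dpta) (P : nat -> pos A) K w :=
  (exists s, P K w = Fired s) \/ (exists u x, w = u ++ x /\ P K u = Removed).

Lemma detd_of (A : dpta) (P : nat -> pos A) k w : P k w <> Untouched -> detd P k w.
Proof.
case E: (P k w) => [|s|] // _; first by left; exists s.
by right; exists w, [::]; rewrite cats0.
Qed.

Lemma detd_mono (A : dpta) (m : nat -> seq (action A)) K K' w :
  legal_play m -> K <= K' -> detd (posSeq m) K w -> detd (posSeq m) K' w.
Proof.
move=> Hl HK [[s Hs]|[u [x [Ew Hu]]]].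
  by left; exists s; rewrite (play_persist Hl HK) Hs.
by right; exists u, x; split=> //; rewrite (play_persist Hl HK) Hu.
Qed.

Lemma detd_event (A : dpta) (m : nat -> seq (action A)) :
  legal_play m -> live (posSeq m) -> forall w, exists K, detd (posSeq m) K w.
Proof.
move=> Hl Hlive; elim/last_ind => [|v d [K HK]].
  case E: (posSeq m 0 [::]) => [|s|].
  - have [k' [_ Hk']] := Hlive 0 [::] (conj E (or_introl (erefl _))).
    by exists k'; apply: detd_of.
  - by exists 0; apply: detd_of; rewrite E.
  - by exists 0; apply: detd_of; rewrite E.
case: HK => [[s Hs]|[u [x [Ev Hu]]]]; last first.
  by exists K; right; exists u, (rcons x d); rewrite Ev rcons_cat.
case E: (posSeq m K (rcons v d)) => [|s'|].
- have Ht : token (posSeq m K) (rcons v d) by split=> //; right; exists v, d, s.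
  have [k' [_ Hk']] := Hlive _ _ Ht.
  by exists k'; apply: detd_of.
- by exists K; apply: detd_of; rewrite E.
- by exists K; apply: detd_of; rewrite E.
Qed.

Lemma detd_list (A : dpta) (m : nat -> seq (action A)) :
  legal_play m -> (forall w, exists K, detd (posSeq m) K w) ->
  forall L : seq node, exists K, forall w, w \in L -> detd (posSeq m) K w.
Proof.
move=> Hl Hev; elim=> [|w L [K HK]]; first by exists 0.
have [K' HK'] := Hev w.
exists (maxn K K') => w'; rewrite in_cons => /orP [/eqP ->|Hw'].
  exact: detd_mono Hl (leq_maxr _ _) HK'.
exact: detd_mono Hl (leq_maxl _ _) (HK _ Hw').
Qed.

Lemma dir1 (A B : dpta) :
  (exists str : dup_strategy A B, dup_winning str) -> wadge_le (@lang A) (@lang B).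
Proof.
move=> [str Hw].
pose Qm := fun t : tree (Sig A) => dup_moves str (sp t).
have HQ : forall t, [/\ legal_play (Qm t), live (posSeq (Qm t)) &
    (play_accepting (posSeq (sp t)) <-> play_accepting (posSeq (Qm t)))].
  move=> t; have [H1 [H2 H3]] := Hw (sp t) (sp_legal t); by split.
case Hb: [pick b : Sig B] => [b0|]; last first.
  have Hempty : Sig B -> False.
    by move=> b; move: Hb; case: pickP => [x _|/(_ b)] //.
  have Hne : tree (Sig A) -> False.
    move=> t; have [Hl Hlive _] := HQ t.
    have [k [_ Hk]] := Hlive 0 [::] (conj (erefl _) (or_introl (erefl _))).
    move: Hk; case E: (posSeq (Qm t) k [::]) => [|s|] // _.
    have [_ Hr] := play_inv Hl k.
    apply: (Hr _ E) => t0 _; exact: Hempty (t0 [::]).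
  exists (fun t => False_rect _ (Hne t)); split; move=> t; case: (Hne t).
exists (fun t => comp (posSeq (Qm t)) b0); split.
  move=> t n.
  have [Hl Hlive _] := HQ t.
  have [K HK] := detd_list Hl (detd_event Hl Hlive) (nodesUpTo n.+1).
  exists K => t' Ht' w Hwn.
  have [Hl' _ _] := HQ t'.
  have Esp : forall j, j <= K -> sp t' j = sp t j.
    move=> j Hj; rewrite /sp; apply/eq_in_map => v; rewrite mem_nodesz => /eqP Hv /=.
    by rewrite Ht' // Hv.
  have EK : forall k, k <= K -> posSeq (Qm t') k = posSeq (Qm t) k.
    elim=> [|k IH] Hk //=.
    rewrite IH ?(ltnW Hk) //; congr apply_move.
    rewrite /Qm /dup_moves; congr str.
    apply/eq_in_map => i; rewrite mem_iota add0n => /andP [_ Hi].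
    apply: Esp; exact: ltnW (leq_trans Hi Hk).
  have := HK w; rewrite mem_nodesUpTo ltnS => /(_ Hwn).
  case=> [[s Hs]|[u [x [-> Hu]]]].
    rewrite (comp_fired b0 Hl Hs) (comp_fired b0 Hl' (k := K) (s := s)) //.
    by rewrite EK.
  rewrite (comp_removed b0 x Hl Hu) (comp_removed b0 x Hl' (k := K)) ?EK //.
move=> t.
have [Hl Hlive Heq] := HQ t.
rewrite -(play_comp_iff b0 Hl Hlive) -Heq.
symmetry; apply: play_acc_iff.
- by move=> k v s; rewrite posSeq_sp; case: ifP => // _ [].
- by move=> u k; rewrite posSeq_sp; case: ifP.
- move=> pi n _; exists n.+1; by rewrite posSeq_sp size_prefix ltnSn.
Qed.

Definition pb (P : Prop) : bool := if excluded_middle_informative P then true else false.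

Lemma pbP (P : Prop) : reflect P (pb P).
Proof. rewrite /pb; case: excluded_middle_informative => H; by constructor. Qed.

Definition consistent (A : dpta) (a0 : Sig A) (p : pos A) (t : tree (Sig A)) : Prop :=
  forall v, (forall s, p v = Fired s -> t v = s) /\
            (p v = Removed -> forall x, t (v ++ x) = fill a0 (stateAt (init A) p v) x).

Definition detP (A B : dpta) (f : tree (Sig A) -> tree (Sig B)) (a0 : Sig A)
  (p : pos A) (w : node) :=
  forall t1 t2, consistent a0 p t1 -> consistent a0 p t2 -> f t1 w = f t2 w.

Definition Rb (A B : dpta) (f : tree (Sig A) -> tree (Sig B)) (a0 : Sig A)
  (p : pos A) (n : nat) (w : node) : bool :=
  (size w < n) && all (fun j => pb (detP f a0 p (take j w))) (iota 0 (size w).+1).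

Definition valD (A B : dpta) (f : tree (Sig A) -> tree (Sig B)) (a0 : Sig A)
  (p : pos A) (w : node) : Sig B :=
  f (epsilon (inhabits (fun _ => a0)) (consistent a0 p)) w.

Definition Rpos (A B : dpta) (f : tree (Sig A) -> tree (Sig B)) (a0 : Sig A)
  (p : pos A) (n : nat) : pos B :=
  fun w => if Rb f a0 p n w then Fired (valD f a0 p w) else Untouched.

Definition posOf (A : dpta) (ms : seq (seq (action A))) : pos A :=
  foldl (@apply_move A) (fun _ => Untouched) ms.

Definition leS : rel node := fun a b => size a <= size b.

Definition wstr (A B : dpta) (f : tree (Sig A) -> tree (Sig B)) (a0 : Sig A) :
  dup_strategy A B := fun ms =>
  [seq (w, Some (valD f a0 (posOf ms) w)) |
     w <- sort leS [seq w <- nodesUpTo (size ms) |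
                     Rb f a0 (posOf ms) (size ms) w &&
                     ~~ Rb f a0 (posOf (take (size ms).-1 ms)) (size ms).-1 w]].

Lemma posOf_mkseq (A : dpta) (s : nat -> seq (action A)) k : posOf (mkseq s k) = posSeq s k.
Proof. elim: k => [|k IH] //; by rewrite /posOf mkseqS foldl_rcons -/(posOf _) IH. Qed.

Lemma take_mkseqS (T : Type) (s : nat -> T) k : take k (mkseq s k.+1) = mkseq s k.
Proof. by rewrite mkseqS -cats1 take_size_cat // size_mkseq. Qed.

Lemma sl_play (A : dpta) (s : nat -> seq (action A)) : spoiler_legal s -> legal_play s.
Proof. by move=> H k; have [H1 _] := H k. Qed.

Lemma sl_live (A : dpta) (s : nat -> seq (action A)) : spoiler_legal s -> live (posSeq s).
Proof.
move=> H k w Ht; exists k.+1; split=> //.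
have [_ H2] := H k.
move=> Hu; apply: (H2 w Ht); split=> //.
case: Ht => _ [->|[v [d [s' [Ev Hv]]]]]; first by left.
right; exists v, d, s'; split=> //.
by rewrite (play_persist (sl_play H) (leqnSn k)) ?Hv.
Qed.

Lemma cons_T (A : dpta) (s : nat -> seq (action A)) a0 k :
  legal_play s -> consistent a0 (posSeq s k) (comp (posSeq s) a0).
Proof.
move=> Hl v; split.
  move=> s' Hs; exact: comp_fired Hl Hs.
move=> Hr x; exact: comp_removed Hl Hr.
Qed.

Lemma cons_mono (A : dpta) (s : nat -> seq (action A)) a0 k k' t :
  legal_play s -> k <= k' -> consistent a0 (posSeq s k') t -> consistent a0 (posSeq s k) t.
Proof.
move=> Hl Hk H v; have [H1 H2] := H v; split.
  move=> s' Hs; apply: H1; by rewrite (play_persist Hl Hk) Hs.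
move=> Hr x.
have Hr' : posSeq s k' v = Removed by rewrite (play_persist Hl Hk) Hr.
rewrite H2 // (stateAt_gfire a0 Hl (k := k')) ?Hr' //.
by rewrite (stateAt_gfire a0 Hl (k := k)) ?Hr.
Qed.

Lemma valD_T (A B : dpta) (f : tree (Sig A) -> tree (Sig B)) (s : nat -> seq (action A)) a0 k w :
  legal_play s -> detP f a0 (posSeq s k) w ->
  valD f a0 (posSeq s k) w = f (comp (posSeq s) a0) w.
Proof.
move=> Hl Hd; apply: Hd; last exact: cons_T.
apply: (epsilon_spec (inhabits (fun _ => a0)) (consistent a0 (posSeq s k))).
by exists (comp (posSeq s) a0); exact: cons_T.
Qed.

Lemma detP_mono (A B : dpta) (f : tree (Sig A) -> tree (Sig B)) (s : nat -> seq (action A)) a0 k k' w :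
  legal_play s -> k <= k' -> detP f a0 (posSeq s k) w -> detP f a0 (posSeq s k') w.
Proof.
move=> Hl Hk H t1 t2 H1 H2; apply: H; exact: cons_mono Hl Hk _.
Qed.

Lemma Rb_mono (A B : dpta) (f : tree (Sig A) -> tree (Sig B)) (s : nat -> seq (action A)) a0 k k' n n' w :
  legal_play s -> k <= k' -> n <= n' -> Rb f a0 (posSeq s k) n w -> Rb f a0 (posSeq s k') n' w.
Proof.
move=> Hl Hk Hn /andP [Hw Ha]; apply/andP; split; first exact: leq_trans Hw Hn.
apply: sub_all Ha => j /pbP H; apply/pbP; exact: detP_mono Hl Hk H.
Qed.

Lemma Rb_det (A B : dpta) (f : tree (Sig A) -> tree (Sig B)) a0 p n w :
  Rb f a0 p n w -> detP f a0 p w.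
Proof.
move=> /andP [_ /allP H].
have := H (size w); rewrite mem_iota add0n ltnSn take_size => /(_ isT).
by move/pbP.
Qed.

Lemma Rb_parent (A B : dpta) (f : tree (Sig A) -> tree (Sig B)) a0 p n v d :
  Rb f a0 p n (rcons v d) -> Rb f a0 p n v.
Proof.
move=> /andP [Hw /allP H]; apply/andP; split.
  by apply: leq_trans Hw; rewrite size_rcons.
apply/allP => j; rewrite mem_iota add0n => /andP [_ Hj].
have := H j; rewrite mem_iota add0n size_rcons (ltn_trans Hj (ltnSn _)).
by rewrite -cats1 takel_cat // => /(_ isT).
Qed.

Lemma sp_det (A : dpta) (s : nat -> seq (action A)) :
  spoiler_legal s -> forall k v, size v < k -> detd (posSeq s) k v.
Proof.
move=> Hs; have Hl := sl_play Hs.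
elim=> [|k IH] v //; rewrite ltnS leq_eqVlt => /orP [/eqP Hv|Hv]; last first.
  exact: detd_mono Hl (leqnSn k) (IH v Hv).
have Hnext : forall w, token (posSeq s k) w -> detd (posSeq s) k.+1 w.
  move=> w Ht; apply: detd_of.
  have [k' [Hk' Hu]] := sl_live Hs Ht.
  move=> Hu'; have [_ H2] := Hs k.
  apply: (H2 w Ht); split=> //.
  case: Ht => _ [->|[v' [d [s' [Ev Hv']]]]]; first by left.
  right; exists v', d, s'; split=> //.
  by rewrite (play_persist Hl (leqnSn k)) ?Hv'.
case/lastP: v Hv => [|v d] Hv.
  case E: (posSeq s k [::]) => [|s'|].
  - by apply: Hnext; split=> //; left.
  - by apply: detd_of; rewrite (play_persist Hl (leqnSn k)) E.
  - by apply: detd_of; rewrite (play_persist Hl (leqnSn k)) E.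
have Hvk : size v < k by rewrite -Hv size_rcons.
case: (IH v Hvk) => [[s' Hs']|[u [x [Ev Hu]]]]; last first.
  right; exists u, (rcons x d); rewrite Ev rcons_cat; split=> //.
  by rewrite (play_persist Hl (leqnSn k)) Hu.
case E: (posSeq s k (rcons v d)) => [|s''|].
- by apply: Hnext; split=> //; right; exists v, d, s'.
- by apply: detd_of; rewrite (play_persist Hl (leqnSn k)) E.
- by apply: detd_of; rewrite (play_persist Hl (leqnSn k)) E.
Qed.

Lemma cons_agree (A : dpta) (s : nat -> seq (action A)) a0 n t :
  spoiler_legal s -> consistent a0 (posSeq s n.+1) t ->
  forall v, size v <= n -> t v = comp (posSeq s) a0 v.
Proof.
move=> Hs Hc v Hv; have Hl := sl_play Hs.
case: (@sp_det A s Hs n.+1 v Hv) => [[s' Hs']|[u [x [-> Hu]]]].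
  by rewrite (comp_fired a0 Hl Hs'); have [H1 _] := Hc v; exact: H1.
rewrite (comp_removed a0 x Hl Hu); have [_ H2] := Hc u; exact: H2.
Qed.

Lemma dup_move_eq (A B : dpta) (f : tree (Sig A) -> tree (Sig B)) a0 (s : nat -> seq (action A)) k :
  dup_moves (wstr f a0) s k =
  [seq (w, Some (valD f a0 (posSeq s k.+1) w)) |
     w <- sort leS [seq w <- nodesUpTo k.+1 |
                     Rb f a0 (posSeq s k.+1) k.+1 w && ~~ Rb f a0 (posSeq s k) k w]].
Proof.
by rewrite /dup_moves /wstr size_mkseq posOf_mkseq /= take_mkseqS posOf_mkseq.
Qed.

Lemma dup_pos (A B : dpta) (f : tree (Sig A) -> tree (Sig B)) a0 (s : nat -> seq (action A)) :
  spoiler_legal s -> forall k,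
  posSeq (dup_moves (wstr f a0) s) k = Rpos f a0 (posSeq s k) k.
Proof.
move=> Hs; have Hl := sl_play Hs.
elim=> [|k IH].
  by apply: functional_extensionality => w; rewrite /Rpos /Rb ltn0.
rewrite /= IH dup_move_eq; apply: functional_extensionality => w.
rewrite fire_move mem_sort mem_filter mem_nodesUpTo.
case Hn: (Rb f a0 (posSeq s k.+1) k.+1 w); last first.
  rewrite andFb /Rpos Hn.
  case Ho: (Rb f a0 (posSeq s k) k w) => //.
  by rewrite (Rb_mono Hl (leqnSn k) (leqnSn k) Ho) in Hn.
have Hsz : size w < k.+1 by case/andP: Hn.
rewrite Hsz andbT andTb.
case Ho: (Rb f a0 (posSeq s k) k w).
  rewrite /Rpos Ho Hn.
  by rewrite (valD_T Hl (Rb_det Ho)) (valD_T Hl (Rb_det Hn)).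
by rewrite /Rpos Hn.
Qed.

Lemma sorted_leS_tail (L1 L2 : seq node) w v :
  sorted leS (L1 ++ w :: L2) -> v \in L2 -> size w <= size v.
Proof.
rewrite sorted_cat_cons => /andP [_ Hp] Hv.
have := order_path_min (leT := leS) _ Hp.
move=> /(_ (fun a b c => @leq_trans (size a) (size b) (size c))) /allP H.
exact: H v Hv.
Qed.

Lemma dup_legal (A B : dpta) (f : tree (Sig A) -> tree (Sig B)) a0 (s : nat -> seq (action A)) :
  spoiler_legal s -> legal_play (dup_moves (wstr f a0) s).
Proof.
move=> Hs k; have Hl := sl_play Hs.
rewrite dup_pos // dup_move_eq.
set L := sort _ _.
have HmemL : forall v, (v \in L) =
   (Rb f a0 (posSeq s k.+1) k.+1 v && ~~ Rb f a0 (posSeq s k) k v).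
  move=> v; rewrite mem_sort mem_filter mem_nodesUpTo.
  case Hr: (Rb f a0 (posSeq s k.+1) k.+1 v); last by [].
  by case/andP: Hr => ->; rewrite andbT.
apply: legal_fire.
- by rewrite sort_uniq filter_uniq // uniq_nodesUpTo.
- by move=> w; rewrite HmemL /Rpos => /andP [_ /negbTE ->].
move=> L1 w L2 EL.
have Hw : w \in L by rewrite EL mem_cat mem_head orbT.
case/lastP: w EL Hw => [|v d] EL Hw; first by left.
right; exists v, d; split=> //.
move: (Hw); rewrite HmemL => /andP [Hn _].
have Hnv := Rb_parent Hn.
case Ho: (Rb f a0 (posSeq s k) k v).
  by left; exists (valD f a0 (posSeq s k) v); rewrite /Rpos Ho.
right.
have HvL : v \in L by rewrite HmemL Hnv Ho.
move: HvL; rewrite EL mem_cat in_cons => /orP [//|/orP [/eqP E|Hv2]].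
  by have := congr1 size E; rewrite size_rcons => /n_Sn.
have Hsorted : sorted leS L.
  apply: sort_sorted => a b; exact: leq_total.
rewrite EL in Hsorted.
have := sorted_leS_tail Hsorted Hv2; by rewrite size_rcons ltnn.
Qed.

Lemma dup_live (A B : dpta) (f : tree (Sig A) -> tree (Sig B)) a0 (s : nat -> seq (action A)) :
  continuous f -> spoiler_legal s -> live (posSeq (dup_moves (wstr f a0) s)).
Proof.
move=> Hc Hs k w _; have Hl := sl_play Hs.
set T := comp (posSeq s) a0.
have [m Hm] := Hc T (size w).
have Hd : forall j, detP f a0 (posSeq s m.+1) (take j w).
  move=> j t1 t2 H1 H2.
  have Hsz : size (take j w) <= size w by rewrite size_take; case: ifP => // /ltnW.
  rewrite (Hm t1 _ _ Hsz); last exact: (cons_agree Hs H1).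
  by rewrite (Hm t2 _ _ Hsz) //; exact: (cons_agree Hs H2).
set K := maxn m.+1 (size w).+1.
have HR : Rb f a0 (posSeq s K) K w.
  apply/andP; split; first by rewrite leq_max ltnSn orbT.
  apply/allP => j _; apply/pbP; apply: detP_mono Hl (leq_maxl _ _) (Hd j).
exists (maxn k K); split; first exact: leq_maxl.
rewrite dup_pos // /Rpos (Rb_mono Hl (leq_maxr k K) (leq_maxr k K) HR) //.
Qed.

Lemma dir2 (A B : dpta) :
  wadge_le (@lang A) (@lang B) -> exists str : dup_strategy A B, dup_winning str.
Proof.
move=> [f [Hc Hred]].
case Ha: [pick a : Sig A] => [a0|]; last first.
  have Hempty : Sig A -> False.
    by move=> a; move: Ha; case: pickP => [x _|/(_ a)] //.
  exists (fun _ => [::]) => s Hs; exfalso.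
  have [_ H2] := Hs 0.
  have Ht : token (posSeq s 0) [::] by split=> //; left.
  case E: (posSeq s 1 [::]) => [|a|].
  - by apply: (H2 _ Ht); split=> //; left.
  - exact: Hempty a.
  - have [_ Hr] := play_inv (sl_play Hs) 1.
    apply: (Hr _ E) => t0 _; exact: Hempty (t0 [::]).
exists (wstr f a0) => s Hs.
have Hl := sl_play Hs.
split; first exact: dup_legal.
split; first exact: dup_live.
rewrite (play_comp_iff a0 Hl (sl_live Hs)) Hred.
symmetry; apply: play_acc_iff.
- move=> k v s'; rewrite dup_pos // /Rpos; case: ifP => // HR [<-].
  by rewrite (valD_T Hl (Rb_det HR)).
- by move=> u k; rewrite dup_pos // /Rpos; case: ifP.
- apply: live_H3; exact: dup_live.
Qed.

Theorem lemma5p2 (A B : dpta) :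
  (exists str : dup_strategy A B, dup_winning str) <-> wadge_le (@lang A) (@lang B).
Proof. split; [exact: dir1 | exact: dir2]. Qed.
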